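(* Let $a>0$, $h>0$, and let $\alpha_1$ be the smallest positive solution $q$ of $\tan(hq)=\frac{2aq}{q^2-a^2}$. If $ha\le1$, then $$\alpha_1\le\sqrt{a^2+\frac{2a}{h}}\le\frac{\sqrt{3a}}{\sqrt h}.$$ If moreover $ha\le 1/3$, then $$\sqrt{a^2+\frac{2a}{h+2ah^2}}\le\alpha_1.$$ Consequently, $\lim_{h\to0}\frac{\alpha_1(h)}{\sqrt{2a/h}}=1$. *)

(* Defs.v *)
From Stdlib Require Import Reals.
From Coquelicot Require Import Coquelicot.
Open Scope R_scope.

(* q is a (genuine) solution of tan(h q) = 2 a q / (q^2 - a^2):
   both sides are defined (cos (h q) <> 0 and q <> a, q > 0 so q^2 - a^2 <> 0)
   and the equality holds. *)
Definition is_pos_solution (a h q : R) : Prop :=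
  0 < q /\ cos (h * q) <> 0 /\ q ^ 2 - a ^ 2 <> 0 /\
  tan (h * q) = 2 * a * q / (q ^ 2 - a ^ 2).

Definition is_smallest_pos_solution (a h alpha1 : R) : Prop :=
  is_pos_solution a h alpha1 /\
  (forall q, is_pos_solution a h q -> alpha1 <= q).

(* Main.v *)
Require Import Defs.
From Stdlib Require Import Reals.
From Coquelicot Require Import Coquelicot.
From Stdlib Require Import Lra Lia Psatz.
Open Scope R_scope.

Lemma sin_ge_xcos y : 0 <= y <= 2 -> y * cos y <= sin y.
Proof.
  intros [H0 H2].
  pose proof PI2_3_2.
  destruct (Rle_lt_dec y (PI/2)) as [Hy|Hy].
  - destruct (SIN y H0 ltac:(lra)) as [S _].
    destruct (COS y ltac:(lra) Hy) as [_ C].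
    unfold sin_lb, cos_ub, sin_approx, cos_approx, sin_term, cos_term in *.
    cbn [sum_f_R0 Nat.mul Nat.add] in *.
    replace (INR (Factorial.fact 0)) with 1 in * by (rewrite INR_IZR_INZ; f_equal; vm_compute; reflexivity).
    replace (INR (Factorial.fact 1)) with 1 in * by (rewrite INR_IZR_INZ; f_equal; vm_compute; reflexivity).
    replace (INR (Factorial.fact 2)) with 2 in * by (rewrite INR_IZR_INZ; f_equal; vm_compute; reflexivity).
    replace (INR (Factorial.fact 3)) with 6 in * by (rewrite INR_IZR_INZ; f_equal; vm_compute; reflexivity).
    replace (INR (Factorial.fact 4)) with 24 in * by (rewrite INR_IZR_INZ; f_equal; vm_compute; reflexivity).
    replace (INR (Factorial.fact 5)) with 120 in * by (rewrite INR_IZR_INZ; f_equal; vm_compute; reflexivity).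
    replace (INR (Factorial.fact 6)) with 720 in * by (rewrite INR_IZR_INZ; f_equal; vm_compute; reflexivity).
    replace (INR (Factorial.fact 7)) with 5040 in * by (rewrite INR_IZR_INZ; f_equal; vm_compute; reflexivity).
    replace (INR (Factorial.fact 8)) with 40320 in * by (rewrite INR_IZR_INZ; f_equal; vm_compute; reflexivity).
    assert (cos y <= 1 - y^2/2 + y^4/24 - y^6/720 + y^8/40320) by (cbn [pow] in *; lra).
    assert (y - y^3/6 + y^5/120 - y^7/5040 <= sin y) by (cbn [pow] in *; lra).
    assert (y*(1 - y^2/2 + y^4/24 - y^6/720 + y^8/40320) <= y - y^3/6 + y^5/120 - y^7/5040).
    { assert (Hu: y^2 <= 4) by nra.
      assert (0 <= y^3 * (y^2/3 - y^4/30 + y^6/840 - y^8/40320)).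
      { apply Rmult_le_pos. apply pow_le; lra.
        set (u := y^2). replace (y^4) with (u*u) by (unfold u; ring).
        replace (y^6) with (u*u*u) by (unfold u; ring).
        replace (y^8) with (u*u*u*u) by (unfold u; ring).
        assert (0 <= u) by (unfold u; nra). assert (u <= 4) by (unfold u; lra).
        assert (0 <= u*(1/3 - u/30)) by (apply Rmult_le_pos; lra).
        assert (0 <= u*u*u*(1/840 - u/40320)) by (apply Rmult_le_pos; [apply Rmult_le_pos; [apply Rmult_le_pos|]|]; lra).
        lra. }
      nra. }
    nra.
  - assert (cos y <= 0) by (apply cos_le_0; lra).
    assert (0 <= sin y) by (apply sin_ge_0; lra). nra.
Qed.

Lemma cos_lb2 x : 0 < x < 2 -> 1 - x^2/2 <= cos x.
Proof.
  intros Hx.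
  assert (E: cos x = 1 - 2*sin(x/2)*sin(x/2)) by (rewrite <- cos_2a_sin; f_equal; field).
  rewrite E.
  assert (0 < sin (x/2)) by (apply sin_pos_tech; lra).
  assert (sin (x/2) < x/2) by (apply sin_lt_x; lra).
  nra.
Qed.

Lemma tan_ub x : 0 < x <= 1 -> tan x <= x + x^3.
Proof.
  intros Hx.
  assert (Hc := cos_lb2 x ltac:(lra)).
  assert (sin x < x) by (apply sin_lt_x; lra).
  assert (Hc0 : 0 < cos x) by nra.
  unfold tan. apply (Rmult_le_reg_r (cos x)); auto.
  unfold Rdiv. rewrite Rmult_assoc, Rinv_l, Rmult_1_r by lra.
  assert (x <= (x + x^3) * (1 - x^2/2)).
  { assert (0 <= x^3 * (1 - x^2)/2).
    { apply Rmult_le_pos; [apply Rmult_le_pos|]; try lra. apply pow_le; lra. nra. }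
    nra. }
  assert ((x + x^3) * (1 - x^2/2) <= (x + x^3) * cos x).
  { apply Rmult_le_compat_l; auto. assert (0 <= x^3) by (apply pow_le; lra). lra. }
  lra.
Qed.

Lemma g_cont a h : continuity (fun q => sin (h*q) * (q^2 - a^2) - 2*a*q*cos(h*q)).
Proof. reg. Qed.

Lemma upper a h al : 0 < a -> 0 < h -> is_smallest_pos_solution a h al -> h*a <= 1 ->
  al <= sqrt (a^2 + 2*a/h).
Proof.
  intros Ha Hh [Hsol Hmin] Hha.
  assert (Hih : h * /h = 1) by (field; lra).
  assert (Hihp : 0 < /h) by (apply Rinv_0_lt_compat; lra).
  assert (HL : 0 < a^2 + 2*a/h) by (unfold Rdiv; nra).
  set (qs := sqrt (a^2 + 2*a/h)).
  assert (Hq2 : qs^2 = a^2 + 2*a/h) by (apply pow2_sqrt; lra).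
  assert (Hqp : 0 < qs) by (apply sqrt_lt_R0; lra).
  set (g := fun q => sin (h*q) * (q^2 - a^2) - 2*a*q*cos(h*q)).
  assert (Hca : 0 < cos (h*a)) by (pose proof PI2_1; apply cos_gt_0; nra).
  assert (Hga : g a < 0) by (unfold g; replace (a^2-a^2) with 0 by ring; assert (0 < a*a*cos(h*a)) by (apply Rmult_lt_0_compat; nra); nra).
  assert (Haq : a < qs).
  { assert (a^2 < qs^2) by (unfold Rdiv in *; nra). nra. }
  set (y := h * qs).
  assert (Hy2 : y^2 <= 3).
  { unfold y. replace ((h*qs)^2) with (h^2 * qs^2) by ring. rewrite Hq2.
    unfold Rdiv. replace (h^2 * (a^2 + 2*a* /h)) with ((h*a)^2 + 2*a*h*(h*/h)) by ring.
    rewrite Hih. assert (0 < h*a) by nra. replace (2*a*h*1) with (2*(h*a)) by ring. nra. }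
  assert (Hy0 : 0 < y) by (unfold y; nra).
  assert (Hgq : 0 <= g qs).
  { unfold g. fold y.
    assert (E : qs^2 - a^2 = 2*a/h) by lra. rewrite E.
    assert (y * cos y <= sin y) by (apply sin_ge_xcos; nra).
    replace (2*a*qs*cos y) with (2*a/h * (y * cos y)).
    2:{ unfold y. field. lra. }
    assert (0 < 2*a/h) by (unfold Rdiv; nra). nra. }
  destruct (IVT_cor g a qs (g_cont a h) ltac:(lra) ltac:(nra)) as [z [[Hz1 Hz2] Hgz]].
  assert (Hza : a < z).
  { destruct Hz1 as [Hz1|Hz1]; auto. subst z. lra. }
  assert (HE : 0 < z^2 - a^2) by nra.
  assert (Hcz : cos (h*z) <> 0).
  { intro Hc. unfold g in Hgz. rewrite Hc in Hgz.
    assert (Hs := sin2_cos2 (h*z)). rewrite Hc in Hs. unfold Rsqr in Hs.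
    assert (sin (h*z) = 0) by nra. nra. }
  assert (Hzsol : is_pos_solution a h z).
  { split; [lra|split; [auto|split; [lra|]]].
    unfold g in Hgz. unfold tan.
    apply (Rmult_eq_reg_r (cos (h*z) * (z^2 - a^2))).
    2:{ apply Rmult_integral_contrapositive; split; lra. }
    replace (sin (h*z)/cos(h*z) * (cos (h*z) * (z^2 - a^2))) with (sin (h*z) * (z^2-a^2)) by (field; lra).
    replace (2*a*z/(z^2-a^2) * (cos (h*z) * (z^2 - a^2))) with (2*a*z*cos(h*z)) by (field; lra).
    lra. }
  specialize (Hmin z Hzsol). lra.
Qed.

Lemma lower a h al : 0 < a -> 0 < h -> is_pos_solution a h al -> h*a <= 1/3 ->
  sqrt (a^2 + 2*a/(h + 2*a*h^2)) <= al.
Proof.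
  intros Ha Hh [Hq [Hc [HE Ht]]] Hha.
  set (D := h + 2*a*h^2).
  assert (HD : 0 < D) by (unfold D; nra).
  set (iD := /D).
  assert (HiD : D * iD = 1) by (unfold iD; field; lra).
  assert (HiDp : 0 < iD) by (unfold iD; apply Rinv_0_lt_compat; lra).
  assert (HL : 0 < a^2 + 2*a/D) by (unfold Rdiv; fold iD; nra).
  destruct (Rle_lt_dec (sqrt (a^2 + 2*a/D)) al) as [Hle|Hlt]; auto.
  exfalso.
  assert (Hs2 := pow2_sqrt (a^2 + 2*a/D) ltac:(lra)).
  assert (Hsp := sqrt_pos (a^2 + 2*a/D)).
  assert (Hal2 : al^2 < a^2 + 2*a*iD).
  { unfold Rdiv in Hs2, Hsp, Hlt; fold iD in Hs2, Hsp, Hlt. set (s := sqrt (a^2 + 2*a*iD)) in *. rewrite <- Hs2. nra. }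
  destruct (Rlt_or_le al a) as [Hla|Hla].
  - assert (0 < sin (h*al)) by (apply sin_pos_tech; nra).
    assert (0 < cos (h*al)) by (pose proof PI2_1; apply cos_gt_0; nra).
    assert (0 < tan (h*al)).
    { unfold tan, Rdiv. apply Rmult_lt_0_compat; auto. apply Rinv_0_lt_compat; auto. }
    assert (/(al^2 - a^2) < 0) by (apply Rinv_lt_0_compat; nra).
    assert (2*a*al/(al^2-a^2) < 0).
    { unfold Rdiv. assert (0 < 2*a*al) by nra. nra. }
    lra.
  - assert (Hla' : a < al) by (destruct Hla as [Hla|Hla]; auto; subst; exfalso; apply HE; ring).
    set (x := h*al). set (t := a*h).
    assert (Ht0 : 0 < t) by (unfold t; nra).
    assert (Hx0 : 0 < x) by (unfold x; nra).
    set (u := h*h*iD).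
    assert (Hu : u*(1+2*t) = h).
    { unfold u, t. replace (h*h*iD*(1+2*(a*h))) with (h*(D*iD)) by (unfold D; ring).
      rewrite HiD; ring. }
    set (w := a*u).
    assert (Hw : w*(1+2*t) = t) by (unfold w; transitivity (a*(u*(1+2*t))); [ring| rewrite Hu; unfold t; ring]).
    assert (Hw0 : 0 < w) by (unfold w, u; apply Rmult_lt_0_compat; [lra|]; apply Rmult_lt_0_compat; nra).
    assert (Ht3 : t <= 1/3) by (unfold t; lra).
    assert (Hx2 : x^2 < 2*t).
    { assert (x^2 < t^2 + 2*w).
      { unfold x, t, w, u. replace ((h*al)^2) with (h^2 * al^2) by ring.
        assert (0 < h^2) by nra. nra. }
      assert (t <= 4*w) by nra.
      nra. }
    assert (Htan := tan_ub x ltac:(nra)).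
    assert (Hx3 : x + x^3 < x*(1+2*t)).
    { replace (x^3) with (x * x^2) by ring. nra. }
    set (E := al^2 - a^2).
    assert (HE0 : 0 < E) by (unfold E; nra).
    assert (Hxt : x*(1+2*t) = al*D) by (unfold x, t, D; ring).
    assert (HEb : E < 2*a*iD) by (unfold E; lra).
    assert (Hk : x*(1+2*t)*E < 2*a*al).
    { rewrite Hxt. assert (al*D*E < al*D*(2*a*iD)).
      { apply Rmult_lt_compat_l; auto. nra. }
      replace (al*D*(2*a*iD)) with (2*a*al*(D*iD)) in H by ring. rewrite HiD in H. lra. }
    assert (x*(1+2*t) < 2*a*al/E).
    { apply (Rmult_lt_reg_r E); auto. replace (2*a*al/E*E) with (2*a*al) by (field; lra). lra. }
    fold x in Ht. fold E in Ht. lra.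
Qed.

Theorem lemma3p3 (a : R) (Ha : 0 < a) :
  (forall (h alpha1 : R), 0 < h -> is_smallest_pos_solution a h alpha1 ->
     (h * a <= 1 ->
        alpha1 <= sqrt (a ^ 2 + 2 * a / h) /\
        sqrt (a ^ 2 + 2 * a / h) <= sqrt (3 * a) / sqrt h) /\
     (h * a <= 1 / 3 ->
        sqrt (a ^ 2 + 2 * a / (h + 2 * a * h ^ 2)) <= alpha1)) /\
  (forall (h0 : R) (alpha : R -> R), 0 < h0 ->
     (forall h, 0 < h < h0 -> is_smallest_pos_solution a h (alpha h)) ->
     filterlim (fun h => alpha h / sqrt (2 * a / h)) (at_right 0) (locally 1)).
Proof.
  split.
  - intros h al Hh Hs. split.
    + intros Hha. split.
      * apply (upper a h al); auto.
      * rewrite <- sqrt_div by lra. apply sqrt_le_1_alt.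
        assert (Hih : h * /h = 1) by (field; lra).
        assert (Hihp : 0 < /h) by (apply Rinv_0_lt_compat; lra).
        unfold Rdiv.
        assert (a <= /h) by nra. nra.
    + intros Hha. apply (lower a h al); auto. apply Hs.
  - intros h0 alpha Hh0 Hal.
    apply filterlim_locally. intro eps.
    assert (Hd : 0 < Rmin h0 (Rmin (1/(3*a)) (eps/(2*a)))).
    { assert (0 < 1/(3*a)) by (apply Rdiv_lt_0_compat; lra).
      assert (0 < eps/(2*a)) by (apply Rdiv_lt_0_compat; [apply cond_pos|lra]).
      repeat apply Rmin_glb_lt; auto. }
    exists (mkposreal _ Hd). refine (fun (y : R) => _). intros Hb Hy.
    change (Rabs (y - 0) < Rmin h0 (Rmin (1/(3*a)) (eps/(2*a)))) in Hb.
    change (Rabs (alpha y / sqrt (2 * a / y) - 1) < eps).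
    rewrite Rminus_0_r, Rabs_pos_eq in Hb by lra.
    assert (Hy1 : y < h0) by (eapply Rlt_le_trans; [apply Hb|apply Rmin_l]).
    assert (Hy2 : y < 1/(3*a)) by (eapply Rlt_le_trans; [apply Hb|]; eapply Rle_trans; [apply Rmin_r|apply Rmin_l]).
    assert (Hy3 : y < eps/(2*a)) by (eapply Rlt_le_trans; [apply Hb|]; eapply Rle_trans; [apply Rmin_r|apply Rmin_r]).
    assert (Hya : y*a <= 1/3).
    { apply Rlt_le. apply (Rmult_lt_reg_r (3*a)); [lra|]. replace (1/3*(3*a)) with a by field.
      replace (1/(3*a)*(3*a)) with 1 in Hy2 by (field; lra).
      assert (y*(3*a) < 1/(3*a)*(3*a)) by (apply Rmult_lt_compat_r; lra).
      replace (1/(3*a)*(3*a)) with 1 in H by (field; lra). nra. }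
    assert (Hye : 2*a*y < eps).
    { assert (y*(2*a) < eps/(2*a)*(2*a)) by (apply Rmult_lt_compat_r; lra).
      replace (eps/(2*a)*(2*a)) with (pos eps) in H by (field; lra). lra. }
    assert (Hs := Hal y (conj Hy Hy1)).
    assert (Hup := upper a y (alpha y) Ha Hy Hs ltac:(lra)).
    assert (Hlo := lower a y (alpha y) Ha Hy (proj1 Hs) Hya).
    assert (Hpos : 0 < alpha y) by apply (proj1 Hs).
    set (al := alpha y) in *.
    assert (Hiy : y * /y = 1) by (field; lra).
    assert (Hiyp : 0 < /y) by (apply Rinv_0_lt_compat; lra).
    set (iy := /y) in *.
    set (D := y + 2*a*y^2) in *.
    assert (HD : 0 < D) by (unfold D; nra).
    assert (HiD : D * /D = 1) by (field; lra).
    assert (HiDp : 0 < /D) by (apply Rinv_0_lt_compat; lra).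
    set (iD := /D) in *.
    unfold Rdiv in Hup, Hlo |- *. fold iy in Hup |- *. fold iD in Hlo. clearbody iy iD.
    assert (HU : al^2 <= a^2 + 2*a*iy).
    { assert (H0 := pow2_sqrt (a^2 + 2*a*iy) ltac:(nra)).
      assert (H1 := sqrt_pos (a^2 + 2*a*iy)).
      set (s := sqrt (a^2 + 2*a*iy)) in *. rewrite <- H0. nra. }
    assert (HLo : a^2 + 2*a*iD <= al^2).
    { assert (H0 := pow2_sqrt (a^2 + 2*a*iD) ltac:(nra)).
      assert (H1 := sqrt_pos (a^2 + 2*a*iD)).
      set (s := sqrt (a^2 + 2*a*iD)) in *. rewrite <- H0. nra. }
    assert (Hs2 := pow2_sqrt (2*a*iy) ltac:(nra)).
    assert (Hsp : 0 < sqrt (2*a*iy)) by (apply sqrt_lt_R0; nra).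
    set (s := sqrt (2*a*iy)) in *.
    assert (His : s * /s = 1) by (field; lra).
    assert (Hisp : 0 < /s) by (apply Rinv_0_lt_compat; lra).
    set (r := al * /s).
    assert (Hr : al = r * s) by (unfold r; rewrite Rmult_assoc, (Rmult_comm (/s)), His; ring).
    assert (Hr0 : 0 < r) by (unfold r; nra). clearbody r s.
    set (t := a*y).
    assert (Ht0 : 0 < t) by (unfold t; nra).
    assert (Ha2 : a^2 = s^2 * (t/2)).
    { rewrite Hs2. unfold t. replace (2*a*iy*(a*y/2)) with (a^2*(y*iy)) by field. rewrite Hiy. ring. }
    assert (HiD2 : 2*a*iD*(1+2*t) = s^2).
    { rewrite Hs2. unfold t. 
      assert (iD*(1+2*(a*y)) = iy).
      { transitivity (iD*(1+2*(a*y))*(y*iy)); [rewrite Hiy; ring|].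
        transitivity ((D*iD)*iy); [unfold D; ring|]. rewrite HiD; ring. }
      rewrite <- H. ring. }
    assert (HR1 : r^2 <= 1 + t/2).
    { rewrite Hr in HU. rewrite Ha2, Hs2 in HU. rewrite <- Hs2 in HU.
      assert (0 < s^2) by nra.
      assert (s^2 * r^2 <= s^2 * (1 + t/2)) by nra. nra. }
    assert (HR2 : 1 <= r^2 * (1+2*t)).
    { rewrite Hr in HLo.
      assert (s^2 <= (r*s)^2 * (1+2*t)).
      { rewrite <- HiD2. assert (0 <= a^2) by nra. nra. }
      assert (0 < s^2) by nra. nra. }
    assert (Rabs (r - 1) <= 2*t).
    { unfold Rabs. destruct (Rcase_abs (r-1)); nra. }
    replace (al * /s) with r by (rewrite Hr; field; lra). unfold t in H. lra.
Qed.
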